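(* For every positive integer $r$, $\delta(3r+1) \ge r$.
   Context: A double-$n$ string is a string of length $2n$ over an alphabet of $n$ symbols in which each symbol appears exactly twice. Positions in the string are numbered $1,\dots,2n$. The distance between two distinct symbols is the minimum, over an occurrence of the first symbol and an occurrence of the second, of the absolute difference of their positions (so adjacent entries have distance $1$). The diameter of a double-$n$ string ($n\ge 2$) is the maximum of the distance over all pairs of distinct symbols. $\delta(n)$ denotes the minimum diameter over all double-$n$ strings. *)

(* Defs.v *)
From mathcomp Require Import all_boot.
Set Implicit Arguments. Unset Strict Implicit. Unset Printing Implicit Defensive.

(* A string of length 2n over symbols 'I_n is a finite function
   s : 'I_(2n) -> 'I_n (positions 0..2n-1 instead of 1..2n; distances
   are differences of positions, so the shift is irrelevant). *)
Definition str (n : nat) := {ffun 'I_(2 * n) -> 'I_n}.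

Definition is_double (n : nat) (s : str n) : bool :=
  [forall a : 'I_n, #|[pred i | s i == a]| == 2].

Definition absdiff (i j : nat) : nat := (i - j) + (j - i).

(* distance between symbols a and b: minimum of |i - j| over positions
   i with s i = a and j with s j = b.  (For a double string both sets
   are non-empty; the default value 2n of the fold is never attained
   then since all differences are < 2n.) *)
Definition dist (n : nat) (s : str n) (a b : 'I_n) : nat :=
  \big[minn/(2 * n)]_(i : 'I_(2 * n) | s i == a)
     \big[minn/(2 * n)]_(j : 'I_(2 * n) | s j == b) absdiff i j.

Definition diameter (n : nat) (s : str n) : nat :=
  \max_(a : 'I_n) \max_(b : 'I_n | a != b) dist s a b.

Definition has_double_with_diam (n d : nat) : bool :=
  [exists s : str n, is_double s && (diameter s == d)].

Lemma half_lt (n : nat) (i : 'I_(2 * n)) : i./2 < n.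
Proof. by rewrite ltn_half_double -mul2n ltn_ord. Qed.

Definition canon (n : nat) : str n := [ffun i => Ordinal (half_lt i)].

Lemma canon_double (n : nat) : is_double (canon n).
Proof.
apply/forallP => a.
have h0 : a.*2 < 2 * n by rewrite mul2n ltn_double.
have h1 : a.*2.+1 < 2 * n by rewrite mul2n ltn_Sdouble.
rewrite (@eq_card _ _ (pred2 (Ordinal h0) (Ordinal h1))).
  by rewrite card2 -(inj_eq val_inj) /= neq_ltn ltnSn.
move=> i; rewrite !inE ffunE -!(inj_eq val_inj) /=.
apply/eqP/orP.
  move=> <-; have e := odd_double_half i.
  by case: (odd i) e => /= e; [right|left]; rewrite -[X in X == _]e.
case=> /eqP ->; first by rewrite doubleK.
by rewrite -addn1 -[X in _ + X]/(nat_of_bool true) addnC half_bit_double.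
Qed.

Lemma double_exists (n : nat) : exists d, has_double_with_diam n d.
Proof.
exists (diameter (canon n)); apply/existsP; exists (canon n).
by rewrite canon_double eqxx.
Qed.

Definition delta (n : nat) : nat := ex_minn (double_exists n).

(* Main.v *)
Require Import Defs.
From mathcomp Require Import all_boot zify.
Set Implicit Arguments. Unset Strict Implicit. Unset Printing Implicit Defensive.

Lemma dist_ge n (s : str n) a b r :
  r <= 2 * n ->
  (forall i j : 'I_(2*n), s i = a -> s j = b -> r <= absdiff i j) ->
  r <= dist s a b.
Proof.
move=> hN H; rewrite /dist.
apply: (big_ind (fun x => r <= x)) => //.
  by move=> x y hx hy; rewrite leq_min hx hy.
move=> i /eqP hi.
apply: (big_ind (fun x => r <= x)) => //.
  by move=> x y hx hy; rewrite leq_min hx hy.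
move=> j /eqP hj; exact: H.
Qed.

Lemma diam_ge n (s : str n) a b : a != b -> dist s a b <= diameter s.
Proof.
move=> ab; rewrite /diameter.
have h1 := @leq_bigmax_cond _ (fun b0 => a != b0) (fun b => dist s a b) b ab.
have h2 := @leq_bigmax _ (fun a => \max_(b0 | a != b0) dist s a b0) a.
exact: leq_trans h1 h2.
Qed.

Lemma three (T : finType) (x y j j1 j2 : T) : x != y -> j1 != j2 ->
 (j2 == x) || (j2 == y) -> (j1 == x) || (j1 == y) -> (j == x) || (j == y) -> (j == j1) || (j == j2).
Proof.
move=> xy j12.
by move=> /orP[]/eqP ? /orP[]/eqP ? /orP[]/eqP ?; subst; rewrite ?eqxx ?orbT // in j12 *.
Qed.

Lemma key n m (s : str n) : n = 3 * m.+1 + 1 -> is_double s ->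
  exists a b, a != b /\ m.+1 <= dist s a b.
Proof.
move=> hn /forallP hd.
have two b : exists x y, x != y /\ [set k | s k == b] = [set x; y].
  apply/cards2P. rewrite cardsE. exact: hd.
have hN : 0 < 2 * n by lia.
pose o0 := Ordinal hN.
pose a := s o0.
have [p hp] : exists p, [set k | s k == a] = [set o0; p].
  have [x [y [xy E]]] := two a.
  have : o0 \in [set k | s k == a] by rewrite inE.
  rewrite E !inE => /orP [] /eqP ->; first by exists y.
  by exists x; rewrite setUC.
pose F := [set j : 'I_(2*n) | [forall i : 'I_(2*n), (s i == a) ==> (m < absdiff i j)]].
have notaF j : j \in F -> s j != a.
  rewrite inE => /forallP /(_ j); apply: contraL => ->.
  by rewrite /absdiff subnn.
case: (boolP [exists j1, exists j2, [&& j1 \in F, j2 \in F, j1 != j2 & s j1 == s j2]]).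
  case/existsP => j1 /existsP [j2 /and4P [f1 f2 j12 /eqP e12]].
  exists a, (s j1); split.
    by rewrite eq_sym notaF.
  apply: dist_ge; first lia.
  move=> i j hi hj.
  have [x [y [xy E]]] := two (s j1).
  have hjF : j \in F.
    have: j \in [set x;y] by rewrite -E inE hj.
    have: j1 \in [set x;y] by rewrite -E inE.
    have: j2 \in [set x;y] by rewrite -E inE e12.
    rewrite !inE => h2 h1 h0.
    by case/orP: (three xy j12 h2 h1 h0) => /eqP ->; [move: f1|move: f2]; rewrite inE.
  by move: hjF; rewrite inE => /forallP /(_ i); rewrite hi eqxx.
move=> nE; exfalso.
have inj : {in F &, injective s}.
  move=> x y xF yF exy; apply/eqP; apply/negPn/negP => nxy.
  move/negP: nE; apply; apply/existsP; exists x; apply/existsP; exists y.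
  by rewrite xF yF nxy exy eqxx.
have c1 : #|F| <= 3 * m.+1.
  rewrite -(card_in_imset inj).
  have : s @: F \subset [set~ a].
    apply/subsetP => _ /imsetP [j jF ->]. by rewrite !inE notaF.
  move/subset_leq_card; rewrite cardsC1 card_ord. lia.
have nearF j : j \in ~: F -> (j < m.+1) || (absdiff p j < m.+1).
  rewrite !inE => /forallPn [i]; rewrite negb_imply => /andP [/eqP hi].
  rewrite -ltnNge ltnS => h.
  have : i \in [set o0; p] by rewrite -hp inE hi.
  rewrite !inE => /orP [] /eqP e; subst i.
    by move: h; rewrite /absdiff /=; lia.
  by move: h; lia.
have bnd j : j \in ~: F -> (if j < m.+1 then nat_of_ord j else m.+1 + (j + m - p)) < (3*m+1).+1.
  move/nearF; rewrite /absdiff; case: ifP; lia.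
pose f := fun j : 'I_(2*n) => (inord (if j < m.+1 then nat_of_ord j else m.+1 + (j + m - p)) : 'I_(3*m+1).+1).
have inj2 : {in ~: F &, injective f}.
  move=> x y hx hy e; apply: ord_inj; move: e => /(congr1 (@nat_of_ord _)).
  rewrite /f !inordK ?bnd //.
  move: (nearF _ hx) (nearF _ hy); rewrite /absdiff; case: ifP; case: ifP; lia.
have c2 : #|~: F| <= (3*m+1).+1.
  rewrite -(card_in_imset inj2).
  by apply: leq_trans (max_card _) _; rewrite card_ord.
have := cardsC F; rewrite card_ord; lia.
Qed.

Theorem lemma3p2 (r : nat) : 0 < r -> r <= delta (3 * r + 1).
Proof.
case: r => // m _.
rewrite /delta; case: ex_minnP => d /existsP [s /andP [hd /eqP <-]] _.
have [a [b [ab h]]] := key (erefl _) hd.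
apply: (leq_trans h); exact: diam_ge.
Qed.
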